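(* Let $\mathcal{H}$ be a finite hypothesis class of maps $\mathcal{X}\times\{-1,1\}\to\{-1,1\}$ containing the constant classifiers, let $\mathcal{D}_E$ be an empirical distribution over labeled examples $(\hat x,a,y)$, let $\gamma\ge0$, and let $\{(x_j,c_j^{-1},c_j^{+1})\}_{j=1}^n$ be a cost-sensitive classification instance with real costs. Then the FairCSC problem $$\min_{\pi\in\Delta(\mathcal{H})}\ \mathbb{E}_{h\sim\pi}\Big[\sum_{j=1}^n c_j^{h(x_j)}\Big]\quad\text{subject to}\quad |\Delta_{FPR}(\pi,\mathcal{D}_E)|\le\gamma$$ has an optimal solution that is a distribution over $\mathcal{H}$ with support size at most $2$.
   Context: $\Delta(\mathcal{H})$ is the set of probability distributions over $\mathcal{H}$. For $j\in\{-1,1\}$, $FPR_j(\pi,\mathcal{D}_E)=\mathbb{E}_{h\sim\pi}[\Pr_{(x,y)\sim\mathcal{D}_E}(h(x)=+1\mid a=j,y=-1)]$ with $x=(\hat x,a)$, and $\Delta_{FPR}(\pi,\mathcal{D}_E)=FPR_1(\pi,\mathcal{D}_E)-FPR_{-1}(\pi,\mathcal{D}_E)$ (assume $\mathcal{D}_E$ contains examples with $y=-1$ in each group so these rates are defined). *)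

(* Defs.v *)
From mathcomp Require Import all_boot all_order all_algebra.
From mathcomp Require Import reals.
Set Implicit Arguments. Unset Strict Implicit. Unset Printing Implicit Defensive.
Import Order.TTheory GRing.Theory Num.Theory.
Local Open Scope ring_scope.

(* Labels and group attributes in {-1,1} are encoded as bool:
   true = +1, false = -1. *)

Definition hypothesis (X : Type) := X * bool -> bool.

(* A labeled example ((xhat, a), y). *)
Definition example (X : Type) := ((X * bool) * bool)%type.

Definition is_distr (R : realType) (I : finType) (pi : I -> R) : Prop :=
  (forall i, 0 <= pi i) /\ \sum_(i : I) pi i = 1.

(* Empirical distribution D_E: uniform over the sample S (with multiplicity).
   Pr_{D_E}(h(x) = +1 | a = j, y = -1). *)
Definition fp_rate (X : Type) (R : realType) (S : seq (example X))
    (h : hypothesis X) (j : bool) : R :=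
  (count (fun e : example X => [&& e.1.2 == j, ~~ e.2 & h e.1]) S)%:R /
  (count (fun e : example X => (e.1.2 == j) && ~~ e.2) S)%:R.

Definition FPR (X : Type) (R : realType) (I : finType) (hyp : I -> hypothesis X)
    (S : seq (example X)) (pi : I -> R) (j : bool) : R :=
  \sum_(i : I) pi i * fp_rate R S (hyp i) j.

Definition Delta_FPR (X : Type) (R : realType) (I : finType)
    (hyp : I -> hypothesis X) (S : seq (example X)) (pi : I -> R) : R :=
  FPR hyp S pi true - FPR hyp S pi false.

Definition csc_cost (X : Type) (R : realType) (I : finType)
    (hyp : I -> hypothesis X) (n : nat) (xs : 'I_n -> X * bool)
    (c : 'I_n -> bool -> R) (pi : I -> R) : R :=
  \sum_(i : I) pi i * \sum_(j < n) c j (hyp i (xs j)).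

Definition fair_feasible (X : Type) (R : realType) (I : finType)
    (hyp : I -> hypothesis X) (S : seq (example X)) (gamma : R) (pi : I -> R) : Prop :=
  is_distr pi /\ `|Delta_FPR hyp S pi| <= gamma.

Definition support_size (R : realType) (I : finType) (pi : I -> R) : nat :=
  #|[set i : I | pi i != 0]|.

(* Main.v *)
Require Import Defs.
From mathcomp Require Import all_boot all_order all_algebra.
From mathcomp Require Import reals.
From mathcomp Require Import ring lra.
Import Order.TTheory GRing.Theory Num.Theory.
Local Open Scope ring_scope.

Section S.
Variables (R : realFieldType) (I : finType) (f v : I -> R) (K gamma : R).
Hypothesis g0 : 0 <= gamma.
Definition tp i j := (gamma - f j) / (f i - f j).
Definition tm i j := (- gamma - f j) / (f i - f j).
Hypothesis Hc0 : forall j, `|f j| <= gamma -> K <= v j.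
Hypothesis Hcp : forall i j, 0 <= tp i j <= 1 ->
  `|tp i j * f i + (1 - tp i j) * f j| <= gamma -> K <= tp i j * v i + (1 - tp i j) * v j.
Hypothesis Hcm : forall i j, 0 <= tm i j <= 1 ->
  `|tm i j * f i + (1 - tm i j) * f j| <= gamma -> K <= tm i j * v i + (1 - tm i j) * v j.

Lemma lemA i j t : 0 <= t <= 1 -> `|t * f i + (1 - t) * f j| <= gamma ->
  K <= t * v i + (1 - t) * v j.
Proof.
have key : forall i j t, v i <= v j -> 0 <= t <= 1 -> `|t * f i + (1 - t) * f j| <= gamma ->
  K <= t * v i + (1 - t) * v j.
  move=> {}i {}j {}t vij /andP[t0 t1]; rewrite ler_norml => /andP[Gl Gu].
  have hmono : forall s, t <= s -> s * v i + (1 - s) * v j <= t * v i + (1 - t) * v j.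
    move=> s ts; have : 0 <= (s - t) * (v j - v i) by apply: mulr_ge0; lra.
    lra.
  case: (lerP (f i) gamma) => fiu; case: (lerP (- gamma) (f i)) => fil.
  - have := Hc0 i; rewrite ler_norml fil fiu => /(_ isT) Hk; apply: le_trans Hk _.
    have := hmono 1 t1; lra.
  - (* f i < - gamma *)
    set d := f i - f j.
    have dneg : d < 0.
      rewrite ltNge; apply/negP => dle.
      have : 0 <= (1 - t) * d by apply: mulr_ge0; lra.
      rewrite /d; lra.
    have Htm : tm i j * d = - gamma - f j by rewrite /tm -/d divfK // lt_eqF.
    have ttm : t <= tm i j.
      rewrite /tm -/d ler_ndivlMr //; rewrite /d; lra.
    have tm1 : tm i j <= 1.
      rewrite /tm -/d ler_ndivrMr // mul1r /d; lra.
    apply: le_trans _ (hmono _ ttm); apply: Hcm.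
      by rewrite tm1 andbT; lra.
    have -> : tm i j * f i + (1 - tm i j) * f j = - gamma.
      have : tm i j * f i + (1 - tm i j) * f j = tm i j * d + f j by rewrite /d; ring.
      by move=> ->; rewrite Htm; ring.
    by rewrite normrN ger0_norm.
  - (* f i > gamma *)
    set d := f i - f j.
    have dpos : 0 < d.
      rewrite ltNge; apply/negP => dle.
      have : (1 - t) * d <= 0 by apply: mulr_ge0_le0; lra.
      rewrite /d; lra.
    have Htp : tp i j * d = gamma - f j by rewrite /tp -/d divfK // gt_eqF.
    have ttp : t <= tp i j.
      rewrite /tp -/d ler_pdivlMr //; rewrite /d; lra.
    have tp1 : tp i j <= 1.
      rewrite /tp -/d ler_pdivrMr // mul1r /d; lra.
    apply: le_trans _ (hmono _ ttp); apply: Hcp.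
      by rewrite tp1 andbT; lra.
    have -> : tp i j * f i + (1 - tp i j) * f j = gamma.
      have : tp i j * f i + (1 - tp i j) * f j = tp i j * d + f j by rewrite /d; ring.
      by move=> ->; rewrite Htp; ring.
    by rewrite ger0_norm.
  - lra.
move=> ht hG; case: (lerP (v i) (v j)) => vij; first exact: key.
have := key j i (1 - t) (ltW vij).
have -> : 1 - (1 - t) = t by ring.
move=> H; rewrite addrC; apply: H; first lra.
by rewrite addrC.
Qed.
End S.
Lemma lemB (R : realFieldType) (I : finType) (f v : I -> R) (K gamma : R)
  (Hall : forall i j t, 0 <= t <= 1 -> `|t * f i + (1 - t) * f j| <= gamma ->
     K <= t * v i + (1 - t) * v j)
  (pi : I -> R) (pi0 : forall i, 0 <= pi i) (pi1 : \sum_i pi i = 1)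
  (hF : `|\sum_i pi i * f i| <= gamma) :
  K <= \sum_i pi i * v i.
Proof.
set F := \sum_i pi i * f i.
pose g i := v i - K; pose a i := f i - F.
have Hpair : forall i j, a i <= 0 < a j -> 0 <= a j * g i - a i * g j.
  move=> i j /andP[ai aj].
  set D := a j - a i.
  have Dpos : 0 < D by rewrite /D; lra.
  set t := a j / D.
  have tD : t * D = a j by rewrite /t divfK // gt_eqF.
  have t0 : 0 <= t by rewrite /t divr_ge0 // ltW.
  have t1 : t <= 1 by rewrite /t ler_pdivrMr // mul1r /D; lra.
  have HG : t * f i + (1 - t) * f j = F.
    have -> : t * f i + (1 - t) * f j = F + (a j - t * D).
      by rewrite /D /a; ring.
    by rewrite tD subrr addr0.
  have := Hall i j t; rewrite HG t0 t1 => /(_ isT hF) HK.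
  have H : 0 <= t * g i + (1 - t) * g j by rewrite /g; lra.
  have : 0 <= D * (t * g i + (1 - t) * g j) by apply: mulr_ge0 => //; apply: ltW.
  have -> : D * (t * g i + (1 - t) * g j) = (t * D) * g i + (D - t * D) * g j by ring.
  suff -> : (t * D) * g i + (D - t * D) * g j = a j * g i - a i * g j by [].
  by rewrite tD /D; ring.
have Hpure : forall i, a i = 0 -> 0 <= g i.
  move=> i ai; have := Hall i i 1; rewrite ler01 lexx subrr mul0r addr0 !mul1r.
  have -> : f i = F by move: ai; rewrite /a; lra.
  by move=> /(_ isT hF); rewrite /g; lra.
have Sa : \sum_i pi i * a i = 0.
  rewrite /a; under eq_bigr do rewrite mulrBr.
  by rewrite sumrB -mulr_suml pi1 mul1r subrr.
have Sg : \sum_i pi i * g i = \sum_i pi i * v i - K.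
  rewrite /g; under eq_bigr do rewrite mulrBr.
  by rewrite sumrB -mulr_suml pi1 mul1r.
pose L := fun i => a i <= 0.
set A := \sum_(i | ~~ L i) pi i * a i.
set B := \sum_(i | L i) pi i * a i.
set P := \sum_(i | L i) pi i * g i.
set Q := \sum_(i | ~~ L i) pi i * g i.
have AB : B + A = 0 by rewrite -Sa (bigID L) /=.
have PQ : \sum_i pi i * g i = P + Q by rewrite (bigID L) /=.
have A0 : 0 <= A.
  apply: sumr_ge0 => i; rewrite /L -ltNge => ai; apply: mulr_ge0 => //; exact: ltW.
have Dbl : \sum_(i | L i) \sum_(j | ~~ L j) pi i * pi j * (a j * g i - a i * g j) = A * (P + Q).
  have -> : A * (P + Q) = P * A - B * Q by have := AB; move=> e; rewrite (_ : B = - A); [ring | lra].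
  rewrite /P /B mulr_suml mulr_suml -sumrB; apply: eq_bigr => i _.
  rewrite /A /Q mulr_sumr mulr_sumr -sumrB; apply: eq_bigr => j _; ring.
have Dge : 0 <= A * (P + Q).
  rewrite -Dbl; apply: sumr_ge0 => i Li; apply: sumr_ge0 => j Lj.
  apply: mulr_ge0; first exact: mulr_ge0.
  by apply: Hpair; apply/andP; split; [exact: Li | rewrite ltNge; exact: Lj].
suff : 0 <= \sum_i pi i * g i by rewrite Sg; lra.
rewrite PQ; case: (ltrP 0 A) => [Apos|Ale].
  by move: Dge; rewrite pmulr_rge0.
have A00 : A = 0 by apply/eqP; rewrite eq_le Ale A0.
have Hj : forall j, ~~ L j -> pi j * a j = 0.
  apply: psumr_eq0P => // j; rewrite /L -ltNge => aj; apply: mulr_ge0 => //; exact: ltW.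
have Hi : forall i, L i -> - (pi i * a i) = 0.
  apply: psumr_eq0P; first by move=> i Li; rewrite oppr_ge0; apply: mulr_ge0_le0.
  by rewrite sumrN -/B; lra.
have -> : Q = 0.
  rewrite /Q big1 // => j Lj; have := Hj j Lj; move/eqP; rewrite mulf_eq0 => /orP[/eqP->|].
    by rewrite mul0r.
  by move: Lj; rewrite /L => /negP + /eqP e; rewrite e lexx.
rewrite addr0; apply: sumr_ge0 => i Li.
have := Hi i Li; move/eqP; rewrite oppr_eq0 mulf_eq0 => /orP[/eqP->|/eqP ai].
  by rewrite mul0r.
by apply: mulr_ge0 => //; apply: Hpure.
Qed.

Theorem lemma1 (R : realType) (X : Type) (I : finType)
    (hyp : I -> hypothesis X)
    (hyp_inj : injective hyp)
    (const_pos : exists i : I, hyp i = (fun _ => true))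
    (const_neg : exists i : I, hyp i = (fun _ => false))
    (S : seq (example X))
    (S_groups : forall j : bool,
        has (fun e : example X => (e.1.2 == j) && ~~ e.2) S)
    (gamma : R) (gamma_ge0 : 0 <= gamma)
    (n : nat) (xs : 'I_n -> X * bool) (c : 'I_n -> bool -> R) :
  exists pi : I -> R,
    [/\ fair_feasible hyp S gamma pi,
        (forall pi' : I -> R, fair_feasible hyp S gamma pi' ->
           csc_cost hyp xs c pi <= csc_cost hyp xs c pi')
      & (support_size pi <= 2)%N].
Proof.
pose f i := fp_rate R S (hyp i) true - fp_rate R S (hyp i) false.
pose v i := \sum_(j < n) c j (hyp i (xs j)).
have HD : forall pi, Delta_FPR hyp S pi = \sum_i pi i * f i.
  move=> pi; rewrite /Delta_FPR /FPR -sumrB; apply: eq_bigr => i _.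
  by rewrite /f mulrBr.
have HC : forall pi, csc_cost hyp xs c pi = \sum_i pi i * v i by [].
case: const_neg => i0 hi0.
have f0 : f i0 = 0.
  have z : forall j, fp_rate R S (hyp i0) j = 0.
    move=> j; rewrite /fp_rate hi0.
    rewrite (eq_count (a2 := pred0)) ?count_pred0 ?mul0r //.
    by move=> e /=; rewrite !andbF.
  by rewrite /f !z subrr.
pose tv (k : I * I * 'I_3) : R :=
  if val k.2 == 0%N then 0 else if val k.2 == 1%N then tp _ _ f gamma k.1.1 k.1.2
  else tm _ _ f gamma k.1.1 k.1.2.
pose feasb k := (0 <= tv k <= 1) && (`|tv k * f k.1.1 + (1 - tv k) * f k.1.2| <= gamma).
pose costc k := tv k * v k.1.1 + (1 - tv k) * v k.1.2.
pose cand k m := (if m == k.1.1 then tv k else 0) + (if m == k.1.2 then 1 - tv k else 0).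
have lin : forall k (a : I -> R), \sum_m cand k m * a m = tv k * a k.1.1 + (1 - tv k) * a k.1.2.
  move=> k a; rewrite /cand; under eq_bigr do rewrite mulrDl; rewrite big_split /=.
  congr (_ + _).
    rewrite (bigD1 k.1.1) //= eqxx big1 ?addr0 // => m /negbTE ->; by rewrite mul0r.
  rewrite (bigD1 k.1.2) //= eqxx big1 ?addr0 // => m /negbTE ->; by rewrite mul0r.
have k0f : feasb (i0, i0, ord0).
  by rewrite /feasb /tv /= f0 lexx ler01 !mulr0 addr0 normr0.
case: (arg_minP costc k0f) => ks fks Hmin.
have candF : forall k, feasb k -> fair_feasible hyp S gamma (cand k).
  move=> k /andP[/andP[t0 t1] hG]; split; last by rewrite HD lin.
  split.
    move=> m; rewrite /cand; apply: addr_ge0; case: ifP => _ //; lra.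
  have := lin k (fun _ => 1); rewrite !mulr1 => e.
  rewrite -[RHS](_ : tv k + (1 - tv k) = 1); last by ring.
  by rewrite -e; apply: eq_bigr => m _; rewrite mulr1.
exists (cand ks); split.
- exact: candF.
- move=> pi' [[pi0 pi1] hF]; rewrite HC lin -/(costc ks).
  rewrite HD in hF.
  apply: (lemB _ _ f v _ gamma _ pi' pi0 pi1 hF).
  move=> i1 j1 t1; apply: (lemA _ _ f v _ gamma gamma_ge0).
  + move=> j hj; have := Hmin (j, j, ord0).
    rewrite /feasb /costc /tv /= lexx ler01 !mul0r subr0 !mul1r !add0r.
    by move=> /(_ hj).
  + move=> i j h1 h2; have := Hmin (i, j, @Ordinal 3 1 isT).
    rewrite /feasb /costc /tv /=; by move=> /(_ _); apply; rewrite h1 h2.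
  + move=> i j h1 h2; have := Hmin (i, j, @Ordinal 3 2 isT).
    rewrite /feasb /costc /tv /=; by move=> /(_ _); apply; rewrite h1 h2.
- rewrite /support_size.
  apply: leq_trans (_ : #|[set ks.1.1; ks.1.2]| <= 2)%N.
    apply: subset_leq_card; apply/subsetP => m; rewrite !inE /cand.
    by case: (m == ks.1.1); case: (m == ks.1.2); rewrite ?orbT // addr0 eqxx.
  by rewrite cards2; case: (_ != _).
Qed.
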